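(* For every $v\in\Delta\setminus\mathcal C$, $\langle\nabla H(v),F(v)\rangle>0$; i.e. $H$ is a strict Lyapunov function for $F$ on $\Delta$.
   Context: Let $N\ge2$, $E=\{1,\dots,N\}$, $\alpha>1$, and let $A=(A_{i,j})_{i,j\le N}$ be a symmetric matrix with nonnegative entries, $A_{i,j}>0$ for $i\ne j$, and $\sum_j A_{i,j}$ independent of $i$. Let $\Delta=\{v\in\mathbb R_+^N:\ \sum_i v_i=1,\ v_i\le 3/4 \text{ whenever } A_{i,i}=0\}$. For $v\in\Delta$ let $v^\alpha=(v_1^\alpha,\dots,v_N^\alpha)$, $H(v)=\sum_{i,j}A_{i,j}v_i^\alpha v_j^\alpha$ (positive on $\Delta$; $\nabla H$ is its gradient computed from this formula) and $\pi_i(v)=v_i^\alpha(Av^\alpha)_i/H(v)$. Let $\imath$ be the nearest-point projection of $\{v:\sum_iv_i=1\}$ onto $\Delta$ and $F(v)=-v+\pi(\imath(v))$. The equilibrium set is $\mathcal C=\{v\in\Delta: F(v)=0\}$. *)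

(* Defs.v *)
From Stdlib Require Import ClassicalEpsilon.
From mathcomp Require Import all_boot all_order all_algebra.
From mathcomp Require Import all_classical all_reals all_analysis.
Set Implicit Arguments. Unset Strict Implicit. Unset Printing Implicit Defensive.
Import Order.TTheory GRing.Theory Num.Theory.
Local Open Scope ring_scope.

Section Defs.
Variables (R : realType) (N : nat).
Implicit Types (A : 'M[R]_N) (alpha : R) (u v w : 'I_N -> R).

Definition Hfun A alpha v : R :=
  \sum_(i < N) \sum_(j < N) A i j * powR (v i) alpha * powR (v j) alpha.

(* gradient of H computed from the formula above:
   dH/dv_k = alpha v_k^(alpha-1) sum_j (A_kj + A_jk) v_j^alpha *)
Definition gradH A alpha v : 'I_N -> R := fun k =>
  alpha * powR (v k) (alpha - 1) *
  \sum_(j < N) (A k j + A j k) * powR (v j) alpha.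

Definition pifun A alpha v : 'I_N -> R := fun i =>
  powR (v i) alpha * (\sum_(j < N) A i j * powR (v j) alpha) / Hfun A alpha v.

Definition Delta A v : Prop :=
  [/\ forall i, 0 <= v i, \sum_(i < N) v i = 1 &
      forall i, A i i = 0 -> v i <= 3 / 4].

Definition sqdist u v : R := \sum_(i < N) (u i - v i) ^+ 2.

Definition is_proj A v w : Prop :=
  Delta A w /\ forall u, Delta A u -> sqdist v w <= sqdist v u.

(* nearest-point projection iota (Delta is nonempty, closed, convex, so the
   minimizer exists and is unique; chosen by classical choice) *)
Definition iota A v : 'I_N -> R :=
  epsilon (inhabits (fun _ : 'I_N => (0 : R))) (is_proj A v).

Definition Ffun A alpha v : 'I_N -> R := fun i =>
  - v i + pifun A alpha (iota A v) i.

Definition equilibrium A alpha v : Prop :=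
  Delta A v /\ forall i, Ffun A alpha v i = 0.

Definition inner u v : R := \sum_(i < N) u i * v i.

End Defs.

(* Main.v *)
Require Import Defs.
From Stdlib Require Import ClassicalEpsilon.
From mathcomp Require Import all_boot all_order all_algebra.
From mathcomp Require Import all_classical all_reals all_analysis.
From mathcomp Require Import ring lra.
Import Order.TTheory GRing.Theory Num.Theory.
Local Open Scope ring_scope.

Lemma sum_pos_pt (R : realType) (n : nat) (F : 'I_n -> R) i0 :
  (forall i, 0 <= F i) -> 0 < F i0 -> 0 < \sum_i F i.
Proof.
move=> H0 H1; rewrite (bigD1 i0) //=.
have : 0 <= \sum_(i < n | i != i0) F i by apply: sumr_ge0.
lra.
Qed.

Lemma iota_id (R : realType) (N : nat) (A : 'M[R]_N) v :
  Delta A v -> Defs.iota A v = v.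
Proof.
move=> Dv; rewrite /Defs.iota.
have ex : exists w, is_proj A v w.
  exists v; split => // u _; rewrite /sqdist big1 ?sumr_ge0 // => i _;
    [exact: sqr_ge0 | by rewrite subrr expr0n].
have [Dw Hw] := epsilon_spec (inhabits (fun _ : 'I_N => (0 : R))) (is_proj A v) ex.
set w := epsilon _ _ in Dw Hw *.
have := Hw v Dv.
have -> : sqdist v v = 0 by rewrite /sqdist big1 // => i _; rewrite subrr expr0n.
move=> h.
have h0 : sqdist v w = 0.
  apply/eqP; rewrite eq_le h /sqdist sumr_ge0 // => i _; exact: sqr_ge0.
apply/funext => i.
have := @psumr_eq0P _ _ _ (fun j => (v j - w j) ^+ 2) (fun j _ => sqr_ge0 (v j - w j)) h0 i isT.
move/eqP; rewrite sqrf_eq0 subr_eq0 => /eqP ->//.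
Qed.
Lemma Hpos (R : realType) (N : nat) (alpha : R) (A : 'M[R]_N) v :
  (forall i j, 0 <= A i j) ->
  (forall i j, i != j -> 0 < A i j) ->
  Delta A v -> 0 < Hfun A alpha v.
Proof.
move=> Ape Apos [v0 v1 v34].
have [i vi] : exists i, 0 < v i.
  case: (boolP [exists i, 0 < v i]) => [/existsP //|/existsPn hn].
  have : \sum_(i < N) v i <= 0.
    apply: sumr_le0 => i _; have := hn i; rewrite -leNgt //.
  by rewrite v1; lra.
have Tge : forall i j, 0 <= A i j * powR (v i) alpha * powR (v j) alpha.
  by move=> a b; rewrite !mulr_ge0 ?powR_ge0.
rewrite /Hfun; apply: (@sum_pos_pt _ _ _ i).
  by move=> a; apply: sumr_ge0 => b _.
case: (eqVneq (A i i) 0) => Aii.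
  have vi34 := v34 i Aii.
  have [j /andP [ji vj]] : exists j, (j != i) && (0 < v j).
    case: (boolP [exists j, (j != i) && (0 < v j)]) => [/existsP //|/existsPn hn].
    have : \sum_(j < N | j != i) v j <= 0.
      apply: sumr_le0 => j ji; have := hn j; rewrite ji /= -leNgt //.
    move: v1; rewrite (bigD1 i) //=; lra.
  apply: (@sum_pos_pt _ _ _ j) ; first exact: Tge.
  by rewrite !mulr_gt0 ?powR_gt0 // Apos // eq_sym.
apply: (@sum_pos_pt _ _ _ i) ; first exact: Tge.
have : 0 < A i i by rewrite lt_neqAle eq_sym Aii Ape.
by move=> h; rewrite !mulr_gt0 ?powR_gt0.
Qed.

Theorem lemma3p2 (R : realType) (N : nat) (alpha : R) (A : 'M[R]_N) :
  (2 <= N)%N ->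
  1 < alpha ->
  (forall i j, A i j = A j i) ->
  (forall i j, 0 <= A i j) ->
  (forall i j, i != j -> 0 < A i j) ->
  (forall i k, \sum_(j < N) A i j = \sum_(j < N) A k j) ->
  forall v : 'I_N -> R,
    Delta A v -> ~ equilibrium A alpha v ->
    0 < inner (gradH A alpha v) (Ffun A alpha v).
Proof.
move=> N2 a1 Asym Ape Apos Arow v Dv nE.
have iv := @iota_id _ _ A v Dv.
have Hp := @Hpos _ _ alpha A v Ape Apos Dv.
case: (Dv) => v0 v1 _.
set H := Hfun A alpha v in Hp *.
pose x k := powR (v k) alpha.
pose b k := powR (v k) (alpha - 1).
pose y k := \sum_(j < N) A k j * x j.
pose a k := b k * y k.
have xb k : x k = b k * v k.
  rewrite /x /b.
  have e : alpha = alpha - 1 + 1 by ring.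
  rewrite [in LHS]e powRD ?powRr1 // -e gt_eqF //; lra.
have HE : H = \sum_k x k * y k.
  rewrite /H /Hfun; apply: eq_bigr => i _; rewrite /y mulr_sumr.
  by apply: eq_bigr => j _; rewrite /x; ring.
have gE k : gradH A alpha v k = alpha * b k * (2 * y k).
  rewrite /gradH; have -> : \sum_(j < N) (A k j + A j k) * powR (v j) alpha = 2 * y k.
    rewrite /y /x mulr_sumr; apply: eq_bigr => j _.
    by rewrite (Asym j k); ring.
  by [].
have FE k : Ffun A alpha v k = - v k + x k * y k / H.
  by rewrite /Ffun iv.
have HN : H != 0 by rewrite gt_eqF.
have key : inner (gradH A alpha v) (Ffun A alpha v) =
   (2 * alpha / H) * \sum_k v k * (a k - H)^+2 +
   2 * alpha * (\sum_k x k * y k - H * \sum_k v k).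
  rewrite /inner (eq_bigr (fun k => (2*alpha/H) * (v k * (a k - H)^+2)
      + 2*alpha*(x k * y k - H * v k))).
    by rewrite big_split /= -mulr_sumr -mulr_sumr sumrB -mulr_sumr.
  move=> k _; rewrite gE FE xb /a; field => //.
rewrite key -HE v1 mulr1 subrr mulr0 addr0.
apply: mulr_gt0; first by apply: divr_gt0 => //; lra.
have Sge : forall k, 0 <= v k * (a k - H) ^+ 2.
  by move=> k; rewrite mulr_ge0 ?sqr_ge0.
rewrite lt_neqAle sumr_ge0 ?andbT; last by move=> k _; exact: Sge.
apply/eqP => S0; apply: nE; split => // i.
have := @psumr_eq0P _ _ _ (fun k => v k * (a k - H) ^+ 2) (fun k _ => Sge k)
  (esym S0) i isT.
rewrite FE xb; move/eqP; rewrite mulf_eq0 => /orP [/eqP -> | ].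
  by rewrite !(mulr0, mul0r) oppr0 add0r.
rewrite sqrf_eq0 subr_eq0 => /eqP ai.
have -> : b i * v i * y i / H = v i * a i / H by rewrite /a; ring.
by rewrite ai mulfK // addNr.
Qed.
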